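(* Let $K$ be the localization $R[\varphi^{-1}]$ of a $(\varphi)$-adic ring $R$ over $A$ and let $z\in K$ be a global coordinate for $K$. Then $z\otimes1-1\otimes z$ is invertible in both completions $\widehat{K\otimes K}^1$ and $\widehat{K\otimes K}^2$.
   Context: $A$ is a noetherian commutative $\mathbb C$-algebra with the discrete topology; tensor products are over $A$. A $(\varphi)$-adic ring is a commutative $A$-algebra $R$ with a non-invertible non-zero-divisor $\varphi$ such that $R$ is complete and separated in the $\varphi$-adic topology and $R/\varphi R$ is finite free over $A$; $K=R[\varphi^{-1}]$ has the topology in which the $\varphi^NR$ ($N\in\mathbb Z$) form a fundamental system of neighbourhoods of $0$. $\widehat{K\otimes K}$ is the completion of $K\otimes K$ w.r.t. $\varphi^NR\otimes\varphi^MR$; $\widehat{K\otimes K}^1$ and $\widehat{K\otimes K}^2$ are the completions w.r.t. $\varphi^NR\otimes K$ and $K\otimes\varphi^NR$ respectively (these are rings). $z\in K$ is a global coordinate if $\Omega^{1,\mathrm{cont}}_{K/A}$ is finitely generated projective and the kernel of the multiplication map $\widehat{K\otimes K}\to K$ is the ideal generated by $z\otimes1-1\otimes z$. *)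

(* Defs.v *)
From mathcomp Require Import all_boot all_algebra.
From mathcomp Require Import reals Rstruct complex.
From Stdlib Require Import Reals.
From Stdlib Require List.

Set Implicit Arguments.
Unset Strict Implicit.
Unset Printing Implicit Defensive.

Import GRing.Theory.
Local Open Scope ring_scope.

Definition CC : numClosedFieldType := Rdefinitions.R[i].

Definition is_ideal (A : comNzRingType) (Id : A -> Prop) : Prop :=
  Id 0 /\ (forall x y, Id x -> Id y -> Id (x + y)) /\ (forall a x, Id x -> Id (a * x)).

Definition noetherian (A : comNzRingType) : Prop :=
  forall Id : A -> Prop, is_ideal Id ->
  exists s : seq A, forall x,
    Id x <-> exists c : ('I_(size s) -> A), x = \sum_(i < size s) c i * s`_i.

Definition phidvd (A : comNzRingType) (R : comAlgType A) (phi : R) (n : nat) (x : R) :=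
  exists y : R, x = phi ^+ n * y.

Definition phi_adic_ring (A : comNzRingType) (R : comAlgType A) (phi : R) : Prop :=
  ~ (exists u : R, phi * u = 1)
  /\ (forall x : R, phi * x = 0 -> x = 0)
  /\ (forall x : R, (forall n, phidvd phi n x) -> x = 0)
  /\ (forall u : nat -> R,
        (forall N : nat, exists M : nat, forall m n : nat, (leq M m) -> (leq M n) -> phidvd phi N (u m - u n)) ->
        exists l : R, forall N : nat, exists M : nat, forall n : nat, (leq M n) -> phidvd phi N (u n - l))
  (* R / phi R is finite free over A: the classes of b_0, ..., b_(d-1) form an A-basis *)
  /\ (exists (d : nat) (b : 'I_d -> R),
        (forall r : R, exists a : ('I_d -> A), phidvd phi 1 (r - \sum_(i < d) a i *: b i))
        /\ (forall a : 'I_d -> A, phidvd phi 1 (\sum_(i < d) a i *: b i) -> forall i, a i = 0)).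

Definition is_alg_morph (A : comNzRingType) (X Y : lalgType A) (f : X -> Y) : Prop :=
  (forall x y, f (x + y) = f x + f y) /\ (forall x y, f (x * y) = f x * f y)
  /\ f 1 = 1 /\ (forall (a : A) x, f (a *: x) = a *: f x).

(* K together with iota : R -> K is the localization R[phi^-1]
   (phi being a non-zero-divisor, iota is injective). *)
Definition is_localization (A : comNzRingType) (R : comAlgType A) (K : comUnitAlgType A)
    (iota : R -> K) (phi : R) : Prop :=
  is_alg_morph iota /\ injective iota /\ iota phi \is a GRing.unit
  /\ (forall k : K, exists (r : R) (n : nat), k = iota r / iota phi ^+ n).

Definition inPhiR (A : comNzRingType) (R : comAlgType A) (K : comUnitAlgType A)
    (iota : R -> K) (phi : R) (N : int) (x : K) : Prop :=
  exists r : R, x = iota phi ^ N * iota r.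

(* T with i1 i2 : K -> T is the tensor product K (x)_A K
   (i1 k = k (x) 1, i2 k = 1 (x) k, and i1 a * i2 b = a (x) b). *)
Definition is_bilinear (A : comNzRingType) (K : lmodType A) (M : lmodType A)
    (f : K -> K -> M) : Prop :=
  (forall (c : A) x y w, f (c *: x + y) w = c *: f x w + f y w)
  /\ (forall (c : A) w x y, f w (c *: x + y) = c *: f w x + f w y).

Definition is_linear (A : comNzRingType) (U V : lmodType A) (g : U -> V) : Prop :=
  forall (c : A) x y, g (c *: x + y) = c *: g x + g y.

Definition is_tensor_product (A : comNzRingType) (K : comUnitAlgType A) (T : comAlgType A)
    (i1 i2 : K -> T) : Prop :=
  is_alg_morph i1 /\ is_alg_morph i2
  /\ forall (M : lmodType A) (f : K -> K -> M), is_bilinear f ->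
       exists g : T -> M, is_linear g /\ (forall a b, g (i1 a * i2 b) = f a b)
         /\ forall g' : T -> M, is_linear g' -> (forall a b, g' (i1 a * i2 b) = f a b) ->
              forall t, g' t = g t.

Definition tspan (A : comNzRingType) (K : comUnitAlgType A) (T : comAlgType A)
    (i1 i2 : K -> T) (P : K -> K -> Prop) (t : T) : Prop :=
  exists s : seq (K * K), (forall p, p \in s -> P p.1 p.2)
    /\ t = \sum_(p <- s) i1 p.1 * i2 p.2.

Section Nbhds.
Variables (A : comNzRingType) (R : comAlgType A) (phi : R) (K : comUnitAlgType A)
  (iota : R -> K) (T : comAlgType A) (i1 i2 : K -> T).

(* phi^N R (x) K, K (x) phi^N R, phi^N R (x) phi^M R as submodules of K (x) K *)
Definition U1 (N : int) : T -> Prop := tspan i1 i2 (fun a _ => inPhiR iota phi N a).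
Definition U2 (N : int) : T -> Prop := tspan i1 i2 (fun _ b => inPhiR iota phi N b).
Definition U12 (NM : int * int) : T -> Prop :=
  tspan i1 i2 (fun a b => inPhiR iota phi NM.1 a /\ inPhiR iota phi NM.2 b).
End Nbhds.

(* Completions, via Cauchy sequences: for a fundamental system of
   neighbourhoods of 0 (U i)_i, a sequence is Cauchy, resp. tends to 0. *)
Definition cauchy (I : Type) (G : zmodType) (U : I -> G -> Prop) (y : nat -> G) : Prop :=
  forall i, exists n0 : nat, forall m n : nat, (leq n0 m) -> (leq n0 n) -> U i (y m - y n).

Definition tendsto0 (I : Type) (G : zmodType) (U : I -> G -> Prop) (y : nat -> G) : Prop :=
  forall i, exists n0 : nat, forall n : nat, (leq n0 n) -> U i (y n).

(* x (an element of the ring T) is invertible in the separated completion of T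
   w.r.t. U: there is y in the completion (a Cauchy sequence) with x * y = 1. *)
Definition invertible_in_completion (I : Type) (T : ringType) (U : I -> T -> Prop)
    (x : T) : Prop :=
  exists y : nat -> T, cauchy U y /\ tendsto0 U (fun n => x * y n - 1).

Section GlobalCoordinate.
Variables (A : comNzRingType) (R : comAlgType A) (phi : R) (K : comUnitAlgType A)
  (iota : R -> K) (T : comAlgType A) (i1 i2 : K -> T).

Let W := U12 phi iota i1 i2.
Let V := inPhiR iota phi.

(* For the (continuous) multiplication map mu : K (x) K -> K and its extension
   to the completion \hat{K (x) K} (elements = W-Cauchy sequences):
   J = kernel of \hat mu, J^2, the K-module J/J^2 = Omega^{1,cont}_{K/A}. *)
Definition inJ (mu : T -> K) (y : nat -> T) : Prop :=
  cauchy W y /\ tendsto0 V (fun n => mu (y n)).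

Definition inJ2 (mu : T -> K) (y : nat -> T) : Prop :=
  cauchy W y /\
  exists s : seq ((nat -> T) * (nat -> T)),
    (forall p, List.In p s -> inJ mu p.1 /\ inJ mu p.2)
    /\ tendsto0 W (fun n => y n - \sum_(p <- s) p.1 n * p.2 n).

Definition eqJJ2 (mu : T -> K) (y y' : nat -> T) : Prop :=
  inJ2 mu (fun n => y n - y' n).

(* Omega^{1,cont}_{K/A} = J/J^2 is a finitely generated projective K-module:
   it is a direct summand (retract) of some K^n, via K-linear maps
   s : J/J^2 -> K^n and p : K^n -> J/J^2 with p o s = id. *)
Definition Omega_fg_projective (mu : T -> K) : Prop :=
  exists (n : nat) (s : (nat -> T) -> 'I_n -> K) (p : ('I_n -> K) -> nat -> T),
    (forall v, inJ mu (p v))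
    /\ (forall (k : K) v w,
          eqJJ2 mu (p (fun i => k * v i + w i)) (fun m => i1 k * p v m + p w m))
    /\ (forall y y', inJ mu y -> inJ mu y' -> eqJJ2 mu y y' -> s y = s y')
    /\ (forall (k : K) y y', inJ mu y -> inJ mu y' ->
          s (fun m => i1 k * y m + y' m) = (fun i => k * s y i + s y' i))
    /\ (forall y, inJ mu y -> eqJJ2 mu (p (s y)) y).

Definition global_coordinate (z : K) : Prop :=
  forall mu : T -> K, is_linear mu -> (forall a b, mu (i1 a * i2 b) = a * b) ->
    Omega_fg_projective mu
    /\ (forall y, cauchy W y ->
          (tendsto0 V (fun n => mu (y n)) <->
           exists w, cauchy W w /\ tendsto0 W (fun n => y n - (i1 z - i2 z) * w n))).
End GlobalCoordinate.

(* Main.v *)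
Require Import Defs.
From HB Require Import structures.
From mathcomp Require Import all_boot all_algebra.
From mathcomp Require Import boolp.
From mathcomp Require Import zify ring.
From mathcomp Require Import reals Rstruct complex.
Import GRing.Theory.
Local Open Scope ring_scope.

Definition spanP (A : comNzRingType) (K : comUnitAlgType A) (T : comAlgType A)
  (i1 i2 : K -> T) : {pred T} := fun t =>
  `[< exists s : seq ((A * K) * K), t = \sum_(p <- s) p.1.1 *: (i1 p.1.2 * i2 p.2) >].

Lemma spanP_closed (A : comNzRingType) (K : comUnitAlgType A) (T : comAlgType A)
  (i1 i2 : K -> T) : subsemimod_closed (@spanP A K T i1 i2).
Proof.
split; [split|].
- by apply/asboolP; exists [::]; rewrite big_nil.
- move=> u v /asboolP [s ->] /asboolP [s' ->]; apply/asboolP.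
  by exists (s ++ s'); rewrite big_cat.
- move=> c u /asboolP [s ->]; apply/asboolP.
  exists [seq ((c * p.1.1, p.1.2), p.2) | p <- s].
  rewrite big_map scaler_sumr; apply: eq_bigr => p _ /=.
  by rewrite scalerA.
Qed.

Section Span.
Variables (A : comNzRingType) (K : comUnitAlgType A) (T : comAlgType A) (i1 i2 : K -> T).
HB.instance Definition _ := GRing.isSubSemiModClosed.Build A T (@spanP A K T i1 i2) (@spanP_closed A K T i1 i2).
Definition spanT := {t : T | @spanP A K T i1 i2 t}.
HB.instance Definition _ := [isSub of spanT for @proj1_sig T (@spanP A K T i1 i2)].
HB.instance Definition _ := [Choice of spanT by <:].
HB.instance Definition _ := [SubChoice_isSubLmodule of spanT by <:].
End Span.

Lemma span_all (A : comNzRingType) (K : comUnitAlgType A) (T : comAlgType A)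
  (i1 i2 : K -> T) (tp : is_tensor_product i1 i2) : forall t, tspan i1 i2 (fun _ _ => True) t.
Proof.
have h1 : is_alg_morph i1 by case: tp.
have h1' := h1.
case: tp => _ [h2 U].
have Fp : forall a b, @spanP A K T i1 i2 (i1 a * i2 b).
  move=> a b; apply/asboolP; exists [:: ((1, a), b)].
  by rewrite big_cons big_nil addr0 scale1r.
pose Fs (a b : K) : @spanT A K T i1 i2 := Sub (i1 a * i2 b) (Fp a b).
have i1lin : forall (c : A) x y, i1 (c *: x + y) = c *: i1 x + i1 y.
  by move=> c x y; case: h1' => [D [_ [_ Z]]]; rewrite D Z.
have i2lin : forall (c : A) x y, i2 (c *: x + y) = c *: i2 x + i2 y.
  by move=> c x y; case: h2 => [D [_ [_ Z]]]; rewrite D Z.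
have bl : is_bilinear Fs.
  split=> c x y w; apply: val_inj; rewrite /= ?SubK.
  - by rewrite i1lin mulrDl -scalerAl.
  - by rewrite i2lin mulrDr -scalerAr.
have [g [glin [gF _]]] := U _ Fs bl.
have bl0 : is_bilinear (fun a b => i1 a * i2 b : T).
  split=> c x y w.
  - by rewrite i1lin mulrDl -scalerAl.
  - by rewrite i2lin mulrDr -scalerAr.
have [g0 [_ [_ uniq]]] := U _ _ bl0.
move=> t.
have e1 := uniq id (fun c x y => erefl) (fun a b => erefl) t.
have e2 := uniq (fun t => val (g t)).
have : val (g t) = g0 t.
  apply: e2.
  - by move=> c x y; rewrite glin.
  - by move=> a b; rewrite gF ?SubK.
rewrite -e1 => <-.
move: (valP (g t)) => /asboolP [s ->].
exists [seq (p.1.1 *: p.1.2, p.2) | p <- s]; split => //.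
rewrite big_map; apply: eq_bigr => p _ /=.
by case: h1 => _ [_ [_ ->]]; rewrite scalerAl.
Qed.

Set Implicit Arguments.
Unset Strict Implicit.
Unset Printing Implicit Defensive.



Lemma tspan_weaken (A : comNzRingType) (K : comUnitAlgType A) (T : comAlgType A)
  (i1 i2 : K -> T) (P Q : K -> K -> Prop) t :
  (forall a b, P a b -> Q a b) -> tspan i1 i2 P t -> tspan i1 i2 Q t.
Proof. by move=> PQ [s [Hs ->]]; exists s; split => // p /Hs /PQ. Qed.

Lemma tspan_swap (A : comNzRingType) (K : comUnitAlgType A) (T : comAlgType A)
  (i1 i2 : K -> T) (P : K -> K -> Prop) t :
  tspan i1 i2 P t -> tspan i2 i1 (fun a b => P b a) t.
Proof.
move=> [s [Hs ->]]; exists [seq (p.2, p.1) | p <- s]; split.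
  by move=> p /mapP [q qs ->] /=; apply: Hs.
by rewrite big_map; apply: eq_bigr => p _ /=; rewrite mulrC.
Qed.

Section Core.
Variables (A : comNzRingType) (R : comAlgType A) (phi : R) (K : comUnitAlgType A)
  (iota : R -> K) (T : comAlgType A) (i1 i2 : K -> T).
Hypotheses (h1 : is_alg_morph i1) (h2 : is_alg_morph i2) (hi : is_alg_morph iota)
  (fu : iota phi \is a GRing.unit)
  (loc : forall k : K, exists (r : R) (n : nat), k = iota r / iota phi ^+ n)
  (span : forall t, tspan i1 i2 (fun _ _ => True) t).

Local Notation f := (iota phi).
Local Notation V := (inPhiR iota phi).
Local Notation Sm := (U1 phi iota i1 i2).

Lemma morph0 (X Y : lalgType A) (g : X -> Y) : is_alg_morph g -> g 0 = 0.
Proof.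
case=> D _; apply: (@addrI _ (g 0)); by rewrite addr0 -D addr0.
Qed.

Lemma morphN (X Y : lalgType A) (g : X -> Y) : is_alg_morph g -> forall x, g (- x) = - g x.
Proof.
move=> hg x; have := hg => -[D _]; apply/eqP; rewrite -subr_eq0 opprK -D addNr.
by rewrite (morph0 hg).
Qed.

Lemma morphX (X Y : lalgType A) (g : X -> Y) : is_alg_morph g -> forall x k, g (x ^+ k) = g x ^+ k.
Proof.
move=> [_ [M [O _]]] x; elim=> [|k IH]; first by rewrite !expr0.
by rewrite !exprS M IH.
Qed.

Lemma V_mul N M a b : V N a -> V M b -> V (N + M) (a * b).
Proof.
move=> [r ->] [r' ->]; exists (r * r').
case: hi => _ [Mi _]; rewrite Mi exprzDr //.
by rewrite mulrACA.
Qed.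

Lemma V_mono M N a : M <= N -> V N a -> V M a.
Proof.
move=> le [r ->].
have [k Hk] : exists k : nat, N = M + k%:Z.
  by exists `|N - M|%N; lia.
exists (phi ^+ k * r); rewrite Hk exprzDr //.
case: hi => _ [Mi _]; rewrite Mi (morphX hi) -mulrA.
by [].
Qed.

Lemma V_any a : exists n : nat, V (- n%:Z) a.
Proof.
have [r [n ->]] := loc a; exists n; exists r.
by rewrite -exprnN mulrC.
Qed.

Lemma V0 N : V N 0.
Proof. by exists 0; rewrite (morph0 hi) mulr0. Qed.

Lemma VN N a : V N a -> V N (- a).
Proof. by move=> [r ->]; exists (- r); rewrite (morphN hi) mulrN. Qed.

Lemma V1 : V 0 1.
Proof. by exists 1; case: hi => _ [_ [-> _]]; rewrite mulr1. Qed.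

Lemma Vf : V 1 f.
Proof. by exists 1; case: hi => _ [_ [-> _]]; rewrite mulr1 expr1z. Qed.

Lemma Sm0 N : Sm N 0.
Proof. by exists [::]; rewrite big_nil. Qed.

Lemma SmD N u v : Sm N u -> Sm N v -> Sm N (u + v).
Proof.
move=> [s [Hs ->]] [s' [Hs' ->]]; exists (s ++ s'); split; last by rewrite big_cat.
by move=> p; rewrite mem_cat => /orP [/Hs|/Hs'].
Qed.

Lemma SmN N u : Sm N u -> Sm N (- u).
Proof.
move=> [s [Hs ->]]; exists [seq (- p.1, p.2) | p <- s]; split.
  by move=> p /mapP [q qs ->] /=; apply: VN; apply: Hs.
rewrite big_map -sumrN; apply: eq_bigr => p _ /=.
by rewrite (morphN h1) mulNr.
Qed.

Lemma SmB N u v : Sm N u -> Sm N v -> Sm N (u - v).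
Proof. by move=> Hu Hv; apply: SmD => //; apply: SmN. Qed.

Lemma Sm_mono M N u : M <= N -> Sm N u -> Sm M u.
Proof. by move=> le; apply: tspan_weaken => a b; apply: V_mono. Qed.

Lemma Sm_pure N a b : V N a -> Sm N (i1 a * i2 b).
Proof.
by move=> Va; exists [:: (a, b)]; split; [move=> p; rewrite inE => /eqP -> | rewrite big_cons big_nil addr0].
Qed.

Lemma Sm_sum N (I : eqType) (r : seq I) (F : I -> T) :
  (forall i, i \in r -> Sm N (F i)) -> Sm N (\sum_(i <- r) F i).
Proof.
elim: r => [|i r IH] HF; first by rewrite big_nil; apply: Sm0.
rewrite big_cons; apply: SmD; first by apply: HF; rewrite inE eqxx.
by apply: IH => j jr; apply: HF; rewrite inE jr orbT.
Qed.

Lemma Sm_mul N M u v : Sm N u -> Sm M v -> Sm (N + M) (u * v).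
Proof.
move=> [s [Hs ->]] [s' [Hs' ->]].
rewrite big_distrl /=; apply: Sm_sum => p ps; rewrite big_distrr /=.
apply: Sm_sum => p' ps'.
have -> : i1 p.1 * i2 p.2 * (i1 p'.1 * i2 p'.2) = i1 (p.1 * p'.1) * i2 (p.2 * p'.2).
  by case: h1 => _ [-> _]; case: h2 => _ [-> _]; rewrite mulrACA.
by apply: Sm_pure; apply: V_mul; [apply: Hs | apply: Hs'].
Qed.

Lemma Sm_bdd t : exists n : nat, Sm (- n%:Z) t.
Proof.
have [s [_ ->]] := span t.
elim: s => [|p s [n IH]]; first by exists 0%N; rewrite big_nil; apply: Sm0.
have [m Hm] := V_any p.1.
exists (maxn n m); rewrite big_cons; apply: SmD.
  apply: Sm_pure; apply: V_mono Hm; lia.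
apply: Sm_mono IH; lia.
Qed.

Variable x : T.
Hypothesis hw : exists w, cauchy Sm w /\ tendsto0 Sm (fun n => (i1 f - i2 f) - x * w n).

Lemma core : invertible_in_completion Sm x.
Proof.
have [w [wc wt]] := hw.
have i11 : i1 1 = 1 by case: h1 => _ [_ [->]].
have i21 : i2 1 = 1 by case: h2 => _ [_ [->]].
have i1M : forall a b, i1 (a * b) = i1 a * i1 b by case: h1 => _ [].
have i1M' := i1M.
have i2M : forall a b, i2 (a * b) = i2 a * i2 b by case: h2 => _ [].
pose q := i1 f * i2 f^-1.
have Sq : forall k : nat, Sm k (q ^+ k).
  elim=> [|k IH]; first by rewrite expr0 -i11 -[i1 1]mulr1 -i21; apply: Sm_pure; apply: V1.
  rewrite exprS; apply: Sm_mono (Sm_mul (Sm_pure _ Vf) IH); lia.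
pose s n := \sum_(k < n) q ^+ k.
have Ss : forall n, Sm 0 (s n).
  by move=> n; apply: Sm_sum => k _; apply: Sm_mono (Sq k); lia.
have tail : forall (k d : nat), Sm k (s (k + d)%N - s k).
  move=> k; elim=> [|d IH]; first by rewrite addn0 subrr; apply: Sm0.
  rewrite addnS /s big_ord_recr /= -/(s (k + d)%N) addrAC; apply: SmD => //.
  by apply: Sm_mono (Sq _); lia.
have tail2 : forall (k n m : nat), (k <= n)%N -> (k <= m)%N -> Sm k (s n - s m).
  move=> k n m kn km; rewrite -(subnKC kn) -(subnKC km).
  have -> : s (k + (n - k))%N - s (k + (m - k))%N =
    (s (k + (n - k))%N - s k) - (s (k + (m - k))%N - s k) by rewrite opprB addrA subrK.
  by apply: SmB; apply: tail.
pose c := i1 1 * i2 (- f^-1).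
have Sc : Sm 0 c by apply: Sm_pure; apply: V1.
pose g n := c * s n.
have Sg : forall n, Sm 0 (g n) by move=> n; apply: Sm_mono (Sm_mul Sc (Ss n)); lia.
have eg : forall n, (i1 f - i2 f) * g n - 1 = - q ^+ n.
  move=> n; rewrite /g /c mulrA.
  have -> : (i1 f - i2 f) * (i1 1 * i2 (- f^-1)) = - (q - 1).
    rewrite i11 mul1r (morphN h2) mulrN mulrBl -i2M divrr // i21 /q.
    by [].
  by rewrite mulNr /s -subrX1 opprB addrAC subrr add0r.
exists (fun n => w n * g n); split.
- move=> N.
  have [n1 Hn1] := wc 0.
  have [b Hb] := Sm_bdd (w n1).
  have [n2 Hn2] := wc N.
  exists (maxn n1 (maxn n2 (`|N| + b)%N)) => n m Hn Hm.
  have -> : w n * g n - w m * g m = (w n - w m) * g n + w m * (g n - g m) by ring.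
  apply: SmD.
    by apply: Sm_mono (Sm_mul (Hn2 n m _ _) (Sg n)) => //; lia.
  have Swm : Sm (- b%:Z) (w m).
    rewrite -(subrK (w n1) (w m)); apply: SmD => //.
    by apply: Sm_mono (Hn1 m n1 _ _) => //; lia.
  have Sgg : Sm (`|N| + b)%N (g n - g m).
    rewrite /g -mulrBr; apply: Sm_mono (Sm_mul Sc (tail2 (`|N| + b)%N n m _ _)); lia.
  by apply: Sm_mono (Sm_mul Swm Sgg); lia.
- move=> N.
  have [n1 Hn1] := wt N.
  exists (maxn n1 `|N|) => n Hn.
  have -> : x * (w n * g n) - 1 =
     - ((i1 f - i2 f - x * w n) * g n) + ((i1 f - i2 f) * g n - 1) by ring.
  rewrite eg; apply: SmD; first by apply: SmN; apply: Sm_mono (Sm_mul (Hn1 n _) (Sg n)) => //; lia.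
  by apply: SmN; apply: Sm_mono (Sq n); lia.
Qed.
End Core.


Lemma cauchy_tr (I J : Type) (G : zmodType) (U : I -> G -> Prop) (U' : J -> G -> Prop) y :
  (forall j, exists i, forall t, U i t -> U' j t) -> cauchy U y -> cauchy U' y.
Proof.
move=> H c j; have [i Hi] := H j; have [n0 Hn] := c i.
by exists n0 => m n Hm Hn'; apply: Hi; apply: Hn.
Qed.

Lemma tendsto_tr (I J : Type) (G : zmodType) (U : I -> G -> Prop) (U' : J -> G -> Prop) y :
  (forall j, exists i, forall t, U i t -> U' j t) -> tendsto0 U y -> tendsto0 U' y.
Proof.
move=> H c j; have [i Hi] := H j; have [n0 Hn] := c i.
by exists n0 => n Hn'; apply: Hi; apply: Hn.
Qed.

Theorem lemma2 (A : comAlgType CC) (R : comAlgType A) (phi : R)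
    (K : comUnitAlgType A) (iota : R -> K) (T : comAlgType A) (i1 i2 : K -> T)
    (z : K) :
  noetherian A ->
  phi_adic_ring phi ->
  is_localization iota phi ->
  is_tensor_product i1 i2 ->
  global_coordinate phi iota i1 i2 z ->
  invertible_in_completion (U1 phi iota i1 i2) (i1 z - i2 z)
  /\ invertible_in_completion (U2 phi iota i1 i2) (i1 z - i2 z).
Proof.
move=> _ _ [hi [_ [fu loc]]] tp gc.
have span := @span_all _ _ _ _ _ tp.
have [h1 [h2 U]] := tp.
have blm : is_bilinear (fun a b : K => a * b).
  by split=> c x y w; rewrite ?mulrDl ?mulrDr -?scalerAl -?scalerAr.
have [mu [mulin [muF _]]] := U _ _ blm.
have [_ gcE] := gc mu mulin muF.
set f := iota phi.
set x := i1 z - i2 z.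
have i11 : i1 1 = 1 by case: h1 => _ [_ [->]].
have i21 : i2 1 = 1 by case: h2 => _ [_ [->]].
have muB : forall u v, mu (u - v) = mu u - mu v.
  by move=> u v; have := mulin (-1) v u; rewrite !scaleN1r addrC => ->; rewrite addrC.
have Wc : cauchy (U12 phi iota i1 i2) (fun _ => i1 f - i2 f).
  by move=> i; exists 0%N => m n _ _; rewrite subrr; exists [::]; rewrite big_nil.
have [w [wc wt]] : exists w, cauchy (U12 phi iota i1 i2) w /\
    tendsto0 (U12 phi iota i1 i2) (fun n => i1 f - i2 f - x * w n).
  apply/(gcE _ Wc) => N; exists 0%N => n _.
  rewrite muB -[i1 f]mulr1 -i21 -[i2 f]mul1r -i11 !muF mulr1 mul1r subrr.
  by exists 0; rewrite (morph0 hi) mulr0.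
split.
- apply: (core h1 h2 hi fu loc span); exists w; split.
  + by apply: cauchy_tr wc => j; exists (j, 0) => t; apply: tspan_weaken => a b [] //.
  + by apply: tendsto_tr wt => j; exists (j, 0) => t; apply: tspan_weaken => a b [] //.
- have span' : forall t, tspan i2 i1 (fun _ _ => True) t.
    by move=> t; apply: tspan_swap; apply: span.
  have W2 : forall j, exists i, forall t, U12 phi iota i1 i2 i t -> U1 phi iota i2 i1 j t.
    by move=> j; exists (0, j) => t /tspan_swap; apply: tspan_weaken => a b [] //.
  have wc' := cauchy_tr W2 wc.
  have wt' := tendsto_tr W2 wt.
  have [y [yc yt]] : invertible_in_completion (U1 phi iota i2 i1) x.
    apply: (core h2 h1 hi fu loc span'); exists (fun n => - w n); split.
    + move=> N; have [n0 Hn] := wc' N.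
      exists n0 => m n Hm Hn'; rewrite -opprD; apply: (SmN h2 hi).
      by apply: Hn.
    + move=> N; have [n0 Hn] := wt' N.
      exists n0 => n Hn'.
      have -> : i2 f - i1 f - x * - w n = - (i1 f - i2 f - x * w n).
        by rewrite mulrN opprK opprB addrC opprB addrA.
      by apply: (SmN h2 hi); apply: Hn.
  exists y; split.
  + by apply: cauchy_tr yc => j; exists j => t /tspan_swap.
  + by apply: tendsto_tr yt => j; exists j => t /tspan_swap.
Qed.
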